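(* Let $G$ be any weighted finite graph with $N$ vertices. Then for each $1\leq k\leq N$, \[ \overline{h}(k)\leq 1-h(k). \] Moreover: (i) $\overline{h}(k)=1$ if and only if $G$ has at least $k$ connected components each of which is bipartite. (ii) If $G$ is bipartite, then $h(k)+\overline{h}(k)=1$ for each $1\leq k\leq N$. (iii) If $h(k)+\overline{h}(k)=1$, then for a $k$-sub-bipartition $\{(V_{2i-1},V_{2i})\}_{i=1}^k$ attaining the maximum in the definition of $\overline{h}(k)$, and an index $i_0$ with $\phi(V_{2i_0-1}\cup V_{2i_0})=\max_{1\leq i\leq k}\phi(V_{2i-1}\cup V_{2i})$, one has $|E(V_{2i_0-1},V_{2i_0-1})|=|E(V_{2i_0},V_{2i_0})|=0$.
   Context: $G=(V,E,w)$ is a finite undirected graph without self-loops, with $N=|V|$; each edge $\{u,v\}$ carries a positive symmetric weight $w_{uv}$, and $w_{uv}=0$ for non-edges. $d_u=\sum_v w_{uv}$ (implicitly positive). For $A,B\subseteq V$, $|E(A,B)|:=\sum_{u\in A,v\in B}w_{uv}$, $\mathrm{vol}(A):=\sum_{u\in A}d_u$, $\overline{A}=V\setminus A$. For nonempty $S$, $\phi(S):=|E(S,\overline{S})|/\mathrm{vol}(S)$; $h(k):=\min\max_{1\leq i\leq k}\phi(S_i)$ over all collections of $k$ nonempty pairwise disjoint subsets $S_1,\ldots,S_k\subseteq V$. For disjoint $V_1,V_2$ with $V_1\cup V_2\neq\emptyset$, $\overline{\phi}(V_1,V_2):=2|E(V_1,V_2)|/\mathrm{vol}(V_1\cup V_2)$.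 A $k$-sub-bipartition is a collection of $k$ pairs $(V_1,V_2),\ldots,(V_{2k-1},V_{2k})$ of pairwise disjoint subsets of $V$ with $V_{2i-1}\cup V_{2i}\neq\emptyset$ for each $i$ (individual sets may be empty); $\overline{h}(k):=\max\min_{1\leq i\leq k}\overline{\phi}(V_{2i-1},V_{2i})$ over all $k$-sub-bipartitions. A graph is bipartite if its vertex set splits into two classes with every edge joining vertices of different classes. *)

(* Defs.v *)
From mathcomp Require Import all_boot all_order all_algebra.
Set Implicit Arguments. Unset Strict Implicit. Unset Printing Implicit Defensive.
Import Order.TTheory GRing.Theory Num.Theory.
Local Open Scope ring_scope.

Section Graph.
Variables (R : realFieldType) (V : finType) (w : V -> V -> R).

Definition cutw (A B : {set V}) : R := \sum_(u in A) \sum_(v in B) w u v.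
Definition deg (u : V) : R := \sum_(v : V) w u v.
Definition vol (A : {set V}) : R := \sum_(u in A) deg u.
Definition phi (S : {set V}) : R := cutw S (~: S) / vol S.
Definition phibar (A B : {set V}) : R := 2 * cutw A B / vol (A :|: B).

Definition is_kcoll (k : nat) (S : {ffun 'I_k -> {set V}}) : bool :=
  [forall i, S i != set0] &&
  [forall i, forall j, (i != j) ==> [disjoint S i & S j]].

(* k-sub-bipartition: pairs (P i).1 = V_{2i-1}, (P i).2 = V_{2i}; all 2k sets
   pairwise disjoint, each pair with nonempty union *)
Definition is_ksubbip (k : nat) (P : {ffun 'I_k -> {set V} * {set V}}) : bool :=
  [forall i, ((P i).1 :|: (P i).2 != set0) && [disjoint (P i).1 & (P i).2]] &&
  [forall i, forall j, (i != j) ==>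
     [disjoint (P i).1 :|: (P i).2 & (P j).1 :|: (P j).2]].

Definition maxphi (k : nat) (S : {ffun 'I_k -> {set V}}) : R :=
  \big[Num.max/0]_(i < k) phi (S i).

Definition minphibar (k : nat) (P : {ffun 'I_k -> {set V} * {set V}}) : R :=
  \big[Num.min/1]_(i < k) phibar (P i).1 (P i).2.

(* h(k) = min over k-collections of max_i phi(S_i).  The neutral element 1 of
   the outer min is irrelevant when a k-collection exists (k <= N), since
   phi <= 1 whenever w >= 0. *)
Definition h (k : nat) : R :=
  \big[Num.min/1]_(S : {ffun 'I_k -> {set V}} | is_kcoll S) maxphi S.

(* hbar(k) = max over k-sub-bipartitions of min_i phibar. Neutral element 0
   is irrelevant since phibar >= 0 and sub-bipartitions exist for k <= N. *)
Definition hbar (k : nat) : R :=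
  \big[Num.max/0]_(P : {ffun 'I_k -> {set V} * {set V}} | is_ksubbip P)
     minphibar P.

Definition edge : rel V := fun u v => 0 < w u v.
Definition component (x : V) : {set V} := [set y | connect edge x y].
Definition components : {set {set V}} := [set component x | x in V].

Definition bipartite_on (C : {set V}) : bool :=
  [exists A : {set V}, forall u, forall v,
     [&& u \in C, v \in C & edge u v] ==> ((u \in A) != (v \in A))].

Definition num_bipartite_components : nat :=
  #|[set C in components | bipartite_on C]|.

Definition bipartite : Prop :=
  exists A : {set V}, forall u v, edge u v -> (u \in A) != (v \in A).

End Graph.

(* Main.v *)
Require Import Defs.
From mathcomp Require Import all_boot all_order all_algebra.
From mathcomp Require Import ring lra.
Set Implicit Arguments. Unset Strict Implicit. Unset Printing Implicit Defensive.
Import Order.TTheory GRing.Theory Num.Theory.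
Local Open Scope ring_scope.

Lemma sum_setU (R : realFieldType) (T : finType) (A B : {set T}) (F : T -> R) :
  [disjoint A & B] -> \sum_(i in A :|: B) F i = \sum_(i in A) F i + \sum_(i in B) F i.
Proof.
move=> dAB; rewrite -bigU //; apply: eq_bigl => i; by rewrite !inE.
Qed.

Lemma sum_split (R : realFieldType) (T : finType) (S : {set T}) (F : T -> R) :
  \sum_i F i = \sum_(i in S) F i + \sum_(i in ~: S) F i.
Proof.
rewrite (bigID (fun i => i \in S)) /=; congr (_ + _); apply: eq_bigl => i; by rewrite !inE.
Qed.

Lemma cutwUl (R : realFieldType) (V : finType) (w : V -> V -> R) (A B X : {set V}) :
  [disjoint A & B] -> cutw w (A :|: B) X = cutw w A X + cutw w B X.
Proof. by move=> d; rewrite /cutw sum_setU. Qed.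

Lemma cutwUr (R : realFieldType) (V : finType) (w : V -> V -> R) (A B X : {set V}) :
  [disjoint A & B] -> cutw w X (A :|: B) = cutw w X A + cutw w X B.
Proof. by move=> d; rewrite /cutw -big_split /=; apply: eq_bigr => u _; rewrite sum_setU. Qed.

Lemma cutwC (R : realFieldType) (V : finType) (w : V -> V -> R)
  (w_sym : forall u v, w u v = w v u) (A B : {set V}) : cutw w A B = cutw w B A.
Proof. rewrite /cutw exchange_big /=; apply: eq_bigr => u _; apply: eq_bigr => v _; exact: w_sym. Qed.

Lemma cutw_ge0 (R : realFieldType) (V : finType) (w : V -> V -> R)
  (w_nneg : forall u v, 0 <= w u v) (A B : {set V}) : 0 <= cutw w A B.
Proof. by apply: sumr_ge0 => u _; apply: sumr_ge0. Qed.

Lemma cutw0 (R : realFieldType) (V : finType) (w : V -> V -> R)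
  (w_nneg : forall u v, 0 <= w u v) (A B : {set V}) : cutw w A B = 0 ->
  forall u v, u \in A -> v \in B -> w u v = 0.
Proof.
move=> H u v uA vB.
have H1 := psumr_eq0P (fun u _ => sumr_ge0 _ (fun v _ => w_nneg u v)) H uA.
exact: (psumr_eq0P (fun v _ => w_nneg u v) H1 vB).
Qed.

Lemma vol_split (R : realFieldType) (V : finType) (w : V -> V -> R) (S : {set V}) :
  vol w S = cutw w S S + cutw w S (~: S).
Proof. by rewrite /vol /cutw -big_split; apply: eq_bigr => u _; rewrite /deg (sum_split S). Qed.

Lemma vol_pos (R : realFieldType) (V : finType) (w : V -> V -> R)
  (deg_pos : forall u, 0 < deg w u) (S : {set V}) : S != set0 -> 0 < vol w S.
Proof.
case/set0Pn=> x xS; rewrite /vol (bigD1 x) //=; apply: ltr_wpDr; last exact: deg_pos.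
by apply: sumr_ge0 => u _; apply: ltW.
Qed.

Lemma key (R : realFieldType) (V : finType) (w : V -> V -> R)
  (w_sym : forall u v, w u v = w v u)
  (deg_pos : forall u, 0 < deg w u) (A B : {set V}) :
  [disjoint A & B] -> A :|: B != set0 ->
  phibar w A B = 1 - phi w (A :|: B)
     - (cutw w A A + cutw w B B) / vol w (A :|: B).
Proof.
move=> dAB ne.
have vp := vol_pos deg_pos ne.
have Hv : vol w (A :|: B) = cutw w A A + cutw w B B + 2 * cutw w A B
     + cutw w (A :|: B) (~: (A :|: B)).
  rewrite vol_split cutwUl // !cutwUr // (cutwC w_sym B A); ring.
rewrite /phibar /phi.
transitivity ((vol w (A :|: B) - cutw w (A :|: B) (~: (A :|: B))
   - (cutw w A A + cutw w B B)) / vol w (A :|: B)).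
  by congr (_ / _); rewrite Hv; ring.
by field; rewrite gt_eqF.
Qed.

Lemma phi_ge0 (R : realFieldType) (V : finType) (w : V -> V -> R)
  (w_nneg : forall u v, 0 <= w u v) (deg_pos : forall u, 0 < deg w u)
  (S : {set V}) : 0 <= phi w S.
Proof.
rewrite /phi; apply: divr_ge0; first exact: cutw_ge0.
by apply: sumr_ge0 => u _; apply: ltW.
Qed.

Lemma phi_le1 (R : realFieldType) (V : finType) (w : V -> V -> R)
  (w_nneg : forall u v, 0 <= w u v) (deg_pos : forall u, 0 < deg w u)
  (S : {set V}) : S != set0 -> phi w S <= 1.
Proof.
move=> ne; have vp := vol_pos deg_pos ne.
rewrite /phi ler_pdivrMr // mul1r vol_split lerDr; exact: cutw_ge0.
Qed.

Lemma phibar_ge0 (R : realFieldType) (V : finType) (w : V -> V -> R)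
  (w_nneg : forall u v, 0 <= w u v) (deg_pos : forall u, 0 < deg w u)
  (A B : {set V}) : 0 <= phibar w A B.
Proof.
rewrite /phibar; apply: divr_ge0; first by apply: mulr_ge0 => //; exact: cutw_ge0.
by apply: sumr_ge0 => u _; apply: ltW.
Qed.

Lemma phibar_le (R : realFieldType) (V : finType) (w : V -> V -> R)
  (w_sym : forall u v, w u v = w v u)
  (w_nneg : forall u v, 0 <= w u v) (deg_pos : forall u, 0 < deg w u)
  (A B : {set V}) :
  [disjoint A & B] -> A :|: B != set0 ->
  phibar w A B <= 1 - phi w (A :|: B).
Proof.
move=> d ne; rewrite key // lerBlDr lerDl; apply: divr_ge0.
  by apply: addr_ge0; apply: cutw_ge0.
exact: ltW (vol_pos deg_pos ne).
Qed.

Lemma phibar_eq (R : realFieldType) (V : finType) (w : V -> V -> R)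
  (w_sym : forall u v, w u v = w v u)
  (w_nneg : forall u v, 0 <= w u v) (deg_pos : forall u, 0 < deg w u)
  (A B : {set V}) :
  [disjoint A & B] -> A :|: B != set0 ->
  phibar w A B = 1 - phi w (A :|: B) -> cutw w A A = 0 /\ cutw w B B = 0.
Proof.
move=> d ne; rewrite key // => /eqP; rewrite -subr_eq0 addrAC subrr add0r oppr_eq0.
rewrite mulf_eq0 invr_eq0 (gt_eqF (vol_pos deg_pos ne)) orbF.
rewrite paddr_eq0; try exact: cutw_ge0.
by case/andP => /eqP -> /eqP ->.
Qed.

Lemma phibar_eq' (R : realFieldType) (V : finType) (w : V -> V -> R)
  (w_sym : forall u v, w u v = w v u)
  (w_nneg : forall u v, 0 <= w u v) (deg_pos : forall u, 0 < deg w u)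
  (A B : {set V}) :
  [disjoint A & B] -> A :|: B != set0 ->
  cutw w A A = 0 -> cutw w B B = 0 -> phibar w A B = 1 - phi w (A :|: B).
Proof. by move=> d ne HA HB; rewrite key // HA HB addr0 mul0r subr0. Qed.

Lemma subbipP (V : finType) (k : nat) (P : {ffun 'I_k -> {set V} * {set V}}) :
  reflect ((forall i, (P i).1 :|: (P i).2 != set0) /\ (forall i, [disjoint (P i).1 & (P i).2])
    /\ (forall i j, i != j -> [disjoint (P i).1 :|: (P i).2 & (P j).1 :|: (P j).2]))
   (is_ksubbip P).
Proof.
apply: (iffP andP).
  case=> /forallP H1 /forallP H2; split; [|split].
  - by move=> i; case/andP: (H1 i).
  - by move=> i; case/andP: (H1 i).
  - by move=> i j ij; move/forallP: (H2 i) => /(_ j) /implyP; apply.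
case=> H1 [H2 H3]; split; apply/forallP => i; first by rewrite H1 H2.
by apply/forallP => j; apply/implyP; apply: H3.
Qed.

Lemma kcollP (V : finType) (k : nat) (S : {ffun 'I_k -> {set V}}) :
  reflect ((forall i, S i != set0) /\ (forall i j, i != j -> [disjoint S i & S j]))
   (is_kcoll S).
Proof.
apply: (iffP andP).
  case=> /forallP H1 /forallP H2; split => // i j ij.
  by move/forallP: (H2 i) => /(_ j) /implyP; apply.
case=> H1 H3; split; apply/forallP => i => //.
by apply/forallP => j; apply/implyP; apply: H3.
Qed.

Lemma kcoll_of_subbip (V : finType) (k : nat) (P : {ffun 'I_k -> {set V} * {set V}}) :
  is_ksubbip P -> is_kcoll [ffun i => (P i).1 :|: (P i).2].
Proof.
case/subbipP=> H1 [H2 H3]; apply/kcollP; split => [i|i j ij]; rewrite !ffunE.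
  exact: H1.
exact: H3.
Qed.

Lemma subbip_of_kcoll (V : finType) (k : nat) (S : {ffun 'I_k -> {set V}}) (A : {set V}) :
  is_kcoll S -> is_ksubbip [ffun i => (S i :&: A, S i :\: A)].
Proof.
have E : forall i, S i :&: A :|: S i :\: A = S i.
  by move=> i; rewrite setID.
case/kcollP=> H1 H2; apply/subbipP; split; [|split] => [i|i|i j ij]; rewrite ?ffunE /= ?E.
- exact: H1.
- rewrite -setI_eq0; apply/eqP/setP => x; rewrite !inE; by case: (x \in A); rewrite ?andbF.
- exact: H2.
Qed.

Lemma exists_kcoll (V : finType) (k : nat) : (k <= #|V|)%N ->
  exists S : {ffun 'I_k -> {set V}}, is_kcoll S.
Proof.
move=> hk.
pose f (i : 'I_k) : V := enum_val (widen_ord hk i).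
exists [ffun i => [set f i]]; apply/kcollP; split => [i|i j ij]; rewrite !ffunE.
  by apply/set0Pn; exists (f i); rewrite inE.
rewrite disjoints1 inE; apply: contra ij => /eqP /enum_val_inj /(congr1 val) /= /val_inj ->.
by [].
Qed.

Lemma maxphi_ge0 (R : realFieldType) (V : finType) (w : V -> V -> R) k (S : {ffun 'I_k -> {set V}}) :
  0 <= maxphi w S.
Proof. exact: bigmax_ge_id. Qed.

Lemma maxphi_le1 (R : realFieldType) (V : finType) (w : V -> V -> R)
  (w_nneg : forall u v, 0 <= w u v) (deg_pos : forall u, 0 < deg w u)
  k (S : {ffun 'I_k -> {set V}}) : is_kcoll S -> maxphi w S <= 1.
Proof.
case/kcollP => H1 _; apply: bigmax_le => // i _; exact: phi_le1.
Qed.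

Lemma maxphi_attain (R : realFieldType) (V : finType) (w : V -> V -> R)
  (w_nneg : forall u v, 0 <= w u v) (deg_pos : forall u, 0 < deg w u)
  k (hk1 : (1 <= k)%N) (S : {ffun 'I_k -> {set V}}) :
  exists i, maxphi w S = phi w (S i).
Proof.
have [i _ Hi] := @eq_bigmax _ _ _ 0 (Ordinal hk1) xpredT (fun i => phi w (S i)) isT
  (fun i _ => phi_ge0 w_nneg deg_pos (S i)).
by exists i; rewrite -Hi.
Qed.

Lemma h_le1 (R : realFieldType) (V : finType) (w : V -> V -> R) k : h w k <= 1.
Proof. exact: bigmin_le_id. Qed.

Lemma h_ge0 (R : realFieldType) (V : finType) (w : V -> V -> R) k : 0 <= h w k.
Proof. by apply: le_bigmin => // S _; exact: maxphi_ge0. Qed.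

Lemma h_attain (R : realFieldType) (V : finType) (w : V -> V -> R)
  (w_nneg : forall u v, 0 <= w u v) (deg_pos : forall u, 0 < deg w u)
  k (hkN : (k <= #|V|)%N) : exists S : {ffun 'I_k -> {set V}}, is_kcoll S /\ h w k = maxphi w S.
Proof.
have [S0 HS0] := exists_kcoll hkN.
have [S HS HSe] := @eq_bigmin _ _ _ 1 S0 (@is_kcoll V k) (@maxphi R V w k) HS0
  (fun S HS => maxphi_le1 w_nneg deg_pos HS).
by exists S; split => //; rewrite /h HSe.
Qed.

Lemma minphibar_ge0 (R : realFieldType) (V : finType) (w : V -> V -> R)
  (w_nneg : forall u v, 0 <= w u v) (deg_pos : forall u, 0 < deg w u)
  k (P : {ffun 'I_k -> {set V} * {set V}}) : 0 <= minphibar w P.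
Proof. by apply: le_bigmin => // i _; exact: phibar_ge0. Qed.

Lemma hbar_attain (R : realFieldType) (V : finType) (w : V -> V -> R)
  (w_nneg : forall u v, 0 <= w u v) (deg_pos : forall u, 0 < deg w u)
  k (hkN : (k <= #|V|)%N) : exists P : {ffun 'I_k -> {set V} * {set V}}, is_ksubbip P /\ hbar w k = minphibar w P.
Proof.
have [S0 HS0] := exists_kcoll hkN.
have HP0 := subbip_of_kcoll set0 HS0.
have [P HP HPe] := @eq_bigmax _ _ _ 0 _ (@is_ksubbip V k) (@minphibar R V w k) HP0
  (fun P HP => minphibar_ge0 w_nneg deg_pos P).
by exists P; split => //; rewrite /hbar HPe.
Qed.

Lemma main1 (R : realFieldType) (V : finType) (w : V -> V -> R)
  (w_sym : forall u v, w u v = w v u)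
  (w_nneg : forall u v, 0 <= w u v) (deg_pos : forall u, 0 < deg w u)
  k (hk1 : (1 <= k)%N) (P : {ffun 'I_k -> {set V} * {set V}}) :
  is_ksubbip P ->
  exists i0, minphibar w P <= phibar w (P i0).1 (P i0).2 /\
     phibar w (P i0).1 (P i0).2 <= 1 - phi w ((P i0).1 :|: (P i0).2) /\
     phi w ((P i0).1 :|: (P i0).2) = maxphi w [ffun i => (P i).1 :|: (P i).2] /\
     h w k <= maxphi w [ffun i => (P i).1 :|: (P i).2].
Proof.
move=> HP; have HS := kcoll_of_subbip HP.
have [i0 Hi0] := maxphi_attain w_nneg deg_pos hk1 [ffun i => (P i).1 :|: (P i).2].
rewrite ffunE in Hi0.
case/subbipP: HP => H1 [H2 H3].
exists i0; split; first exact: bigmin_le.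
split; first exact: phibar_le.
split; first by [].
exact: bigmin_le_cond.
Qed.

Lemma w0_of_noedge (R : realFieldType) (V : finType) (w : V -> V -> R)
  (w_nneg : forall u v, 0 <= w u v) u v : ~~ edge w u v -> w u v = 0.
Proof. by rewrite /edge -leNgt => H; apply: le_anti; rewrite H w_nneg. Qed.

Lemma cutw_zero (R : realFieldType) (V : finType) (w : V -> V -> R) (X Y : {set V}) :
  (forall u v, u \in X -> v \in Y -> w u v = 0) -> cutw w X Y = 0.
Proof. by move=> H; apply: big1 => u uX; apply: big1 => v vY; apply: H. Qed.

Lemma maxphi_ffun (R : realFieldType) (V : finType) (w : V -> V -> R) k
  (P : {ffun 'I_k -> {set V} * {set V}}) :
  maxphi w [ffun i => (P i).1 :|: (P i).2] = \big[Num.max/0]_(i < k) phi w ((P i).1 :|: (P i).2).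
Proof. by rewrite /maxphi; apply: eq_bigr => i _; rewrite ffunE. Qed.

Lemma part1 (R : realFieldType) (V : finType) (w : V -> V -> R)
  (w_sym : forall u v, w u v = w v u)
  (w_nneg : forall u v, 0 <= w u v) (deg_pos : forall u, 0 < deg w u)
  k (hk1 : (1 <= k)%N) : hbar w k <= 1 - h w k.
Proof.
apply: bigmax_le; first by rewrite subr_ge0 h_le1.
move=> P HP; have [i0 [H1 [H2 [H3 H4]]]] := main1 w_sym w_nneg deg_pos hk1 HP.
lra.
Qed.

Lemma part3 (R : realFieldType) (V : finType) (w : V -> V -> R)
  (w_sym : forall u v, w u v = w v u)
  (w_nneg : forall u v, 0 <= w u v) (deg_pos : forall u, 0 < deg w u)
  k : (h w k + hbar w k = 1 ->
      forall P : {ffun 'I_k -> {set V} * {set V}},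
        is_ksubbip P -> minphibar w P = hbar w k ->
        forall i0 : 'I_k,
          phi w ((P i0).1 :|: (P i0).2)
            = \big[Num.max/0]_(i < k) phi w ((P i).1 :|: (P i).2) ->
          cutw w (P i0).1 (P i0).1 = 0 /\ cutw w (P i0).2 (P i0).2 = 0).
Proof.
move=> Hs P HP Hm i0 Hi0.
have HS := kcoll_of_subbip HP.
have H1 : minphibar w P <= phibar w (P i0).1 (P i0).2 by apply: bigmin_le.
case/subbipP: (HP) => D1 [D2 D3].
have H2 := phibar_le w_sym w_nneg deg_pos (D2 i0) (D1 i0).
have H4 : h w k <= maxphi w [ffun i => (P i).1 :|: (P i).2] by apply: bigmin_le_cond.
rewrite maxphi_ffun -Hi0 in H4.
apply: phibar_eq => //; lra.
Qed.

Lemma part2 (R : realFieldType) (V : finType) (w : V -> V -> R)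
  (w_sym : forall u v, w u v = w v u)
  (w_nneg : forall u v, 0 <= w u v) (deg_pos : forall u, 0 < deg w u)
  k (hk1 : (1 <= k)%N) (hkN : (k <= #|V|)%N) :
  bipartite w -> h w k + hbar w k = 1.
Proof.
case=> A HA.
have [S [HS Hh]] := h_attain w_nneg deg_pos hkN.
pose P := [ffun i => (S i :&: A, S i :\: A)].
have HP : is_ksubbip P := subbip_of_kcoll A HS.
have noA : forall u v, u \in A -> v \in A -> w u v = 0.
  move=> u v uA vA; apply: w0_of_noedge => //; apply/negP => /HA.
  by rewrite uA vA.
have noB : forall u v, u \notin A -> v \notin A -> w u v = 0.
  move=> u v uA vA; apply: w0_of_noedge => //; apply/negP => /HA.
  by rewrite (negbTE uA) (negbTE vA).
have Hi : forall i, phibar w (P i).1 (P i).2 = 1 - phi w (S i).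
  move=> i; case/subbipP: (HP) => D1 [D2 D3].
  have E : (P i).1 :|: (P i).2 = S i by rewrite ffunE /= setID.
  rewrite -E.
  apply: phibar_eq' => //.
    by apply: cutw_zero => u v; rewrite ffunE /= !inE => /andP[_ uA] /andP[_ vA]; apply: noA.
  by apply: cutw_zero => u v; rewrite ffunE /= !inE => /andP[uA _] /andP[vA _]; apply: noB.
have H1 : 1 - maxphi w S <= minphibar w P.
  apply: le_bigmin; first by rewrite lerBlDr lerDl maxphi_ge0.
  move=> i _; rewrite Hi; apply: lerB => //; rewrite /maxphi; exact: (le_bigmax _ (fun j => phi w (S j))).
have H2 : minphibar w P <= hbar w k by apply: le_bigmax_cond.
have H3 := part1 w_sym w_nneg deg_pos hk1.
lra.
Qed.

Lemma subbip_of_kcoll' (V : finType) (k : nat) (S : {ffun 'I_k -> {set V}}) (A : 'I_k -> {set V}) :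
  is_kcoll S -> is_ksubbip [ffun i => (S i :&: A i, S i :\: A i)].
Proof.
have E : forall i, S i :&: A i :|: S i :\: A i = S i by move=> i; rewrite setID.
case/kcollP=> H1 H2; apply/subbipP; split; [|split] => [i|i|i j ij]; rewrite ?ffunE /= ?E.
- exact: H1.
- rewrite -setI_eq0; apply/eqP/setP => x; rewrite !inE; by case: (x \in A i); rewrite ?andbF.
- exact: H2.
Qed.

Lemma edge_sym (R : realFieldType) (V : finType) (w : V -> V -> R)
  (w_sym : forall u v, w u v = w v u) : connect_sym (edge w).
Proof. by apply: sym_connect_sym => x y; rewrite /edge w_sym. Qed.

Lemma comp_closed (R : realFieldType) (V : finType) (w : V -> V -> R) x u v :
  u \in component w x -> edge w u v -> v \in component w x.
Proof.
rewrite !inE => xu uv; apply: connect_trans xu _; exact: connect1.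
Qed.

Lemma comp_self (R : realFieldType) (V : finType) (w : V -> V -> R) x :
  x \in component w x.
Proof. by rewrite inE connect0. Qed.

Lemma comp_disj (R : realFieldType) (V : finType) (w : V -> V -> R)
  (w_sym : forall u v, w u v = w v u) x y :
  component w x != component w y -> [disjoint component w x & component w y].
Proof.
move=> H; rewrite -setI_eq0; move: H; apply: contraR => /set0Pn [z].
rewrite !inE => /andP [xz yz].
have xy : connect (edge w) x y.
  apply: connect_trans xz _; by rewrite (edge_sym w_sym).
apply/eqP/setP => t; rewrite !inE; exact: (same_connect (edge_sym w_sym) xy).
Qed.

Lemma comp_sub (R : realFieldType) (V : finType) (w : V -> V -> R)
  (w_sym : forall u v, w u v = w v u) (w_nneg : forall u v, 0 <= w u v)
  (S : {set V}) x : cutw w S (~: S) = 0 -> x \in S -> component w x \subset S.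
Proof.
move=> Hc xS.
have cl : closed (edge w) (mem S).
  apply: (intro_closed (edge_sym w_sym)) => u v uv uS.
  apply/negPn/negP => vS.
  have := cutw0 w_nneg Hc uS (_ : v \in ~: S); rewrite inE => /(_ vS) H.
  by move: uv; rewrite /edge H ltxx.
apply/subsetP => y; rewrite inE => xy.
by rewrite -(closed_connect cl xy).
Qed.

Lemma partI1 (R : realFieldType) (V : finType) (w : V -> V -> R)
  (w_sym : forall u v, w u v = w v u)
  (w_nneg : forall u v, 0 <= w u v) (deg_pos : forall u, 0 < deg w u)
  k (hk1 : (1 <= k)%N) (hkN : (k <= #|V|)%N) :
  hbar w k = 1 -> (k <= num_bipartite_components w)%N.
Proof.
move=> H1.
have [P [HP Hh]] := hbar_attain w_nneg deg_pos hkN.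
case/subbipP: (HP) => D1 [D2 D3].
have Hge : forall i, 1 <= phibar w (P i).1 (P i).2.
  move=> i; have : 1 <= minphibar w P by rewrite -Hh H1.
  by case/bigmin_geP => _; apply.
have Hi : forall i, cutw w ((P i).1 :|: (P i).2) (~: ((P i).1 :|: (P i).2)) = 0
   /\ cutw w (P i).1 (P i).1 = 0 /\ cutw w (P i).2 (P i).2 = 0.
  move=> i.
  have L := phibar_le w_sym w_nneg deg_pos (D2 i) (D1 i).
  have G := phi_ge0 w_nneg deg_pos ((P i).1 :|: (P i).2).
  have E : phibar w (P i).1 (P i).2 = 1 - phi w ((P i).1 :|: (P i).2).
    by have := Hge i; lra.
  have Z : phi w ((P i).1 :|: (P i).2) = 0 by have := Hge i; lra.
  split; last exact: phibar_eq.
  move: Z; rewrite /phi => /eqP; rewrite mulf_eq0 invr_eq0.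
  by rewrite (gt_eqF (vol_pos deg_pos (D1 i))) orbF => /eqP.
have /fin_all_exists [xf Hxf] : forall i, exists x, x \in (P i).1 :|: (P i).2.
  by move=> i; apply/set0Pn; exact: D1.
pose f i := component w (xf i).
have fsub : forall i, f i \subset (P i).1 :|: (P i).2.
  by move=> i; apply: comp_sub => //; case: (Hi i).
have finj : injective f.
  move=> i j fij; apply/eqP; apply/negP => /negP ij.
  have := D3 i j ij; rewrite -setI_eq0 => /eqP /setP /(_ (xf i)).
  rewrite in_set0 in_setI Hxf /=.
  have : xf i \in f j by rewrite -fij comp_self.
  by move/(subsetP (fsub j)) => ->.
have fbip : forall i, bipartite_on w (f i).
  move=> i; apply/existsP; exists (P i).1; apply/forallP => u; apply/forallP => v.
  apply/implyP => /and3P [uC vC uv].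
  have uS := subsetP (fsub i) _ uC; have vS := subsetP (fsub i) _ vC.
  move: uS vS; rewrite !inE.
  case: (Hi i) => _ [HA HB].
  case uA: (u \in (P i).1); case vA: (v \in (P i).1) => //= uB vB.
    by move: uv; rewrite /edge (cutw0 w_nneg HA uA vA) ltxx.
  by move: uv; rewrite /edge (cutw0 w_nneg HB uB vB) ltxx.
rewrite /num_bipartite_components.
have -> : k = #|f @: [set: 'I_k]| by rewrite card_imset // cardsT card_ord.
apply: subset_leq_card; apply/subsetP => C /imsetP [i _ ->].
rewrite inE fbip andbT; apply: imset_f; by rewrite inE.
Qed.

Lemma partI2 (R : realFieldType) (V : finType) (w : V -> V -> R)
  (w_sym : forall u v, w u v = w v u)
  (w_nneg : forall u v, 0 <= w u v) (deg_pos : forall u, 0 < deg w u)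
  k (hk1 : (1 <= k)%N) (hkN : (k <= #|V|)%N) :
  (k <= num_bipartite_components w)%N -> hbar w k = 1.
Proof.
rewrite /num_bipartite_components => hB.
set B := [set C in components w | bipartite_on w C] in hB.
pose C (i : 'I_k) : {set V} := enum_val (widen_ord hB i).
have CB : forall i, C i \in B by move=> i; exact: enum_valP.
have Cinj : forall i j, i != j -> C i != C j.
  move=> i j; apply: contra => /eqP /enum_val_inj /(congr1 val) /= /val_inj ->.
  by [].
have /fin_all_exists [pf Hpf] : forall i, exists p : V * {set V},
   C i = component w p.1 /\ forall u v, u \in C i -> v \in C i -> edge w u v ->
     (u \in p.2) != (v \in p.2).
  move=> i; have := CB i; rewrite inE => /andP [/imsetP [x _ Ex] /existsP [A HA]].
  exists (x, A); split => // u v uC vC uv.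
  move/forallP: HA => /(_ u) /forallP /(_ v) /implyP; apply.
  by rewrite uC vC uv.
pose S := [ffun i => C i].
have HS : is_kcoll S.
  apply/kcollP; split => [i|i j ij]; rewrite !ffunE.
    by apply/set0Pn; exists (pf i).1; case: (Hpf i) => -> _; exact: comp_self.
  case: (Hpf i) => Ei _; case: (Hpf j) => Ej _.
  have := Cinj i j ij; rewrite Ei Ej; exact: comp_disj.
pose P := [ffun i => (S i :&: (pf i).2, S i :\: (pf i).2)].
have HP : is_ksubbip P := subbip_of_kcoll' (fun i => (pf i).2) HS.
case/subbipP: (HP) => D1 [D2 D3].
have Hi : forall i, phibar w (P i).1 (P i).2 = 1.
  move=> i.
  have E : (P i).1 :|: (P i).2 = C i by rewrite !ffunE /= setID.
  case: (Hpf i) => Ei Hb.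
  rewrite phibar_eq' //.
  - rewrite E /phi (_ : cutw w (C i) (~: C i) = 0) ?mul0r ?subr0 //.
    apply: cutw_zero => u v uC; rewrite inE => vC.
    apply: w0_of_noedge => //; apply/negP => uv; move/negP: vC; apply.
    by rewrite Ei; apply: comp_closed uv; rewrite -Ei.
  - apply: cutw_zero => u v; rewrite !ffunE /= !inE => /andP [uC uA] /andP [vC vA].
    apply: w0_of_noedge => //; apply/negP => uv.
    by move: (Hb u v uC vC uv); rewrite uA vA.
  - apply: cutw_zero => u v; rewrite !ffunE /= !inE => /andP [uA uC] /andP [vA vC].
    apply: w0_of_noedge => //; apply/negP => uv.
    by move: (Hb u v uC vC uv); rewrite (negbTE uA) (negbTE vA).
have Hm : minphibar w P = 1.
  by apply: bigmin_eq_id => i _; rewrite Hi.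
have H1 : minphibar w P <= hbar w k by apply: le_bigmax_cond.
have H2 := part1 w_sym w_nneg deg_pos hk1.
have H3 := h_ge0 w k.
lra.
Qed.

Unset Implicit Arguments.

Theorem proposition3p1 (R : realFieldType) (V : finType) (w : V -> V -> R)
  (w_sym : forall u v, w u v = w v u)
  (w_loop : forall u, w u u = 0)
  (w_nneg : forall u v, 0 <= w u v)
  (deg_pos : forall u, 0 < deg w u)
  (k : nat) (hk1 : (1 <= k)%N) (hkN : (k <= #|V|)%N) :
  hbar w k <= 1 - h w k
  /\ (hbar w k = 1 <-> (k <= num_bipartite_components w)%N)
  /\ (bipartite w -> h w k + hbar w k = 1)
  /\ (h w k + hbar w k = 1 ->
      forall P : {ffun 'I_k -> {set V} * {set V}},
        is_ksubbip P -> minphibar w P = hbar w k ->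
        forall i0 : 'I_k,
          phi w ((P i0).1 :|: (P i0).2)
            = \big[Num.max/0]_(i < k) phi w ((P i).1 :|: (P i).2) ->
          cutw w (P i0).1 (P i0).1 = 0 /\ cutw w (P i0).2 (P i0).2 = 0).
Proof.
split; first exact: part1.
split; first by split; [apply: partI1 | apply: partI2].
split; first exact: part2.
exact: part3.
Qed.
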